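(* Let $G$ be a group with finite symmetric generating set $S$ and Laplacian $\Delta$, let $R\ge1$, and let $x\in IG$ with $x^*=x$. Suppose $b\in\mathbb{R}G$ is supported in $B_{2R}$ and $x-b\in\Sigma^2_R IG$. Then for every $\varepsilon\ge 2^{2\lceil\log_2R\rceil}\|b\|_1$ we have $x+\varepsilon\Delta\in\Sigma^2_R IG$.
   Context: For a group $G$ with finite symmetric generating set $S$: $*$ is the linear involution of $\mathbb{R}G$ induced by $g\mapsto g^{-1}$; $IG$ is the augmentation ideal (kernel of $\sum_g c_gg\mapsto\sum_g c_g$); the Laplacian is $\Delta=|S|-\sum_{s\in S}s$; $B_R$ is the ball of radius $R$ about $1$ in the word metric; $\Sigma^2_R\mathbb{R}G$ is the set of finite sums $\sum_i\xi_i^*\xi_i$ with each $\xi_i$ supported in $B_R$, and $\Sigma^2_R IG=IG\cap\Sigma^2_R\mathbb{R}G$. For $b=\sum_g b_gg$, $\|b\|_1=\sum_g|b_g|$. *)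

(* Defs.v *)
From HB Require Import structures.
From mathcomp Require Import all_boot all_order all_algebra.
Set Implicit Arguments. Unset Strict Implicit. Unset Printing Implicit Defensive.
Import Order.TTheory GRing.Theory Num.Theory.

Section GroupRing.
Variables (R : rcfType) (G : groupType).

(* An element of RG is represented by a formal finite sum  sum_i c_i g_i,
   given as a list of pairs (c_i, g_i).  Two representations denote the same
   element of RG iff they have the same coefficient function. *)
Definition RG := seq (R * G).

Definition coef (x : RG) (g : G) : R := (\sum_(p <- x | p.2 == g) p.1)%R.

Definition rg_eq (x y : RG) : Prop := forall g, coef x g = coef y g.

Definition rg_of (g : G) : RG := [:: (1%R, g)].
Definition rg_add (x y : RG) : RG := x ++ y.
Definition rg_scale (c : R) (x : RG) : RG := [seq (c * p.1, p.2)%R | p <- x].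
Definition rg_sub (x y : RG) : RG := rg_add x (rg_scale (-1)%R y).
Definition rg_mul (x y : RG) : RG :=
  [seq ((p.1 * q.1)%R, (p.2 * q.2)%g) | p <- x, q <- y].
Definition rg_star (x : RG) : RG := [seq (p.1, (p.2)^-1%g) | p <- x].

Definition aug (x : RG) : R := (\sum_(p <- x) p.1)%R.
Definition in_IG (x : RG) : Prop := aug x = 0%R.

Definition l1norm (x : RG) : R :=
  (\sum_(g <- undup [seq p.2 | p <- x]) `|coef x g|)%R.

Definition supported (x : RG) (A : G -> Prop) : Prop :=
  forall g, coef x g != 0%R -> A g.

Definition word_prod (w : seq G) : G := foldr (fun a b => (a * b)%g) 1%g w.

Definition ball (S : seq G) (r : nat) (g : G) : Prop :=
  exists w : seq G, [/\ all (fun s => s \in S) w, size w <= r & g = word_prod w].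

Definition symmetric_set (S : seq G) : Prop := forall s, s \in S -> (s^-1)%g \in S.
Definition generates (S : seq G) : Prop := forall g, exists r, ball S r g.

(* Laplacian  |S| - sum_{s in S} s  (S given as a duplicate-free list) *)
Definition laplacian (S : seq G) : RG :=
  (((size S)%:R)%R, 1%g) :: [seq ((-1)%R, s) | s <- S].

Definition Sigma2 (S : seq G) (r : nat) (x : RG) : Prop :=
  exists xis : seq RG,
    (forall xi, xi \in xis -> supported xi (ball S r)) /\
    rg_eq x (flatten [seq rg_mul (rg_star xi) xi | xi <- xis]).

Definition Sigma2I (S : seq G) (r : nat) (x : RG) : Prop :=
  in_IG x /\ Sigma2 S r x.

End GroupRing.

(* Main.v *)
Require Import Defs.
From HB Require Import structures.
From mathcomp Require Import all_boot all_order all_algebra.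
From mathcomp Require Import ring lra zify.
Import Order.TTheory GRing.Theory Num.Theory.
Set Implicit Arguments. Unset Strict Implicit. Unset Printing Implicit Defensive.
Local Open Scope ring_scope.

Section Aux.
Variables (R : rcfType) (G : groupType).
Implicit Types (x y : RG R G) (u g h k : G).

Definition ind (a u : G) : R := (a == u)%:R.

Lemma coefS x u : coef x u = \sum_(p <- x) p.1 * ind p.2 u.
Proof.
rewrite /coef big_mkcond; apply: eq_bigr => p _; rewrite /ind.
by case: eqP => _; rewrite ?mulr1 ?mulr0.
Qed.

Lemma coef_cat x y u : coef (x ++ y) u = coef x u + coef y u.
Proof. by rewrite /coef big_cat. Qed.

Lemma coef_nil u : coef ([::] : RG R G) u = 0.
Proof. by rewrite /coef big_nil. Qed.

Lemma coef_scale c x u : coef (rg_scale c x) u = c * coef x u.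
Proof.
rewrite !coefS /rg_scale big_map mulr_sumr; apply: eq_bigr => p _ /=.
by rewrite mulrA.
Qed.

Lemma coef_star x u : coef (rg_star x) u = coef x (u^-1)%g.
Proof.
rewrite !coefS /rg_star big_map; apply: eq_bigr => p _ /=; congr (_ * _).
by rewrite /ind -{1}(invgK u) (inj_eq (@invg_inj _)).
Qed.

Lemma coef_mul x y u :
  coef (rg_mul x y) u = \sum_(p <- x) \sum_(q <- y) p.1 * q.1 * ind (p.2 * q.2)%g u.
Proof.
rewrite coefS /rg_mul; elim: x => [|p x IH]; first by rewrite !big_nil.
by rewrite /= big_cat big_cons big_map IH.
Qed.

Lemma coef_flatten (s : seq (RG R G)) u :
  coef (flatten s) u = \sum_(y <- s) coef y u.
Proof.
elim: s => [|y s IH]; first by rewrite big_nil coef_nil.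
by rewrite /= coef_cat IH big_cons.
Qed.

Lemma sum_group x (B : seq G) (F : G -> R) :
  uniq B -> (forall p, p \in x -> p.2 \in B) ->
  \sum_(p <- x) p.1 * F p.2 = \sum_(g <- B) coef x g * F g.
Proof.
move=> uB; elim: x => [|p x IH] hx.
  by rewrite big_nil; symmetry; apply: big1 => g _; rewrite coef_nil mul0r.
rewrite big_cons IH; last by move=> q hq; apply: hx; rewrite inE hq orbT.
have pB : p.2 \in B by apply: hx; rewrite inE eqxx.
have -> : \sum_(g <- B) coef (p :: x) g * F g =
   \sum_(g <- B) (p.1 * (ind p.2 g * F g) + coef x g * F g).
  by apply: eq_bigr => g _; rewrite coefS big_cons -coefS mulrDl mulrA.
rewrite big_split /= -mulr_sumr; congr (_ * _ + _); rewrite (bigD1_seq p.2) //= /ind eqxx mul1r.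
rewrite big1 ?addr0 // => g /negPf; rewrite eq_sym => ->; by rewrite mul0r.
Qed.

Lemma coef_support x u :
  coef x u = \sum_(g <- undup [seq p.2 | p <- x]) coef x g * ind g u.
Proof.
rewrite {1}coefS; apply: sum_group; first exact: undup_uniq.
by move=> p hp; rewrite mem_undup; apply/mapP; exists p.
Qed.

Lemma aug_support x :
  aug x = \sum_(g <- undup [seq p.2 | p <- x]) coef x g.
Proof.
rewrite /aug.
have := @sum_group x (undup [seq p.2 | p <- x]) (fun _ => 1) (undup_uniq _).
rewrite (eq_bigr (fun p => p.1)) => [->|p _]; last by rewrite mulr1.
  by apply: eq_bigr => g _; rewrite mulr1.
by move=> p hp; rewrite mem_undup; apply/mapP; exists p.
Qed.

End Aux.
Arguments ind {R G}.

Section Aux2.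
Variables (R : rcfType) (G : groupType) (S : seq G) (r : nat).
Implicit Types (x y xi : RG R G) (u g h k : G) (f : G -> R).

Definition Sf f := exists xis : seq (RG R G),
  (forall xi, xi \in xis -> supported xi (ball S r)) /\
  forall g, f g = coef (flatten [seq rg_mul (rg_star xi) xi | xi <- xis]) g.

Lemma Sf_ext f f' : (forall u, f u = f' u) -> Sf f -> Sf f'.
Proof. move=> e [xis [h1 h2]]; exists xis; split=> // g; by rewrite -e. Qed.

Lemma Sf0 : Sf (fun _ => 0).
Proof. exists [::]; split=> // g; by rewrite coef_nil. Qed.

Lemma Sf_add f f' : Sf f -> Sf f' -> Sf (fun u => f u + f' u).
Proof.
move=> [xs [h1 h2]] [ys [h1' h2']]; exists (xs ++ ys); split.
  by move=> xi; rewrite mem_cat => /orP[]; [apply: h1|apply: h1'].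
by move=> g; rewrite map_cat flatten_cat coef_cat h2 h2'.
Qed.

Lemma coef_sqE xi u : coef (rg_mul (rg_star xi) xi) u =
  \sum_(p <- xi) \sum_(q <- xi) p.1 * q.1 * ind (p.2^-1 * q.2)%g u.
Proof. by rewrite coef_mul /rg_star big_map. Qed.

Lemma coef_sq_scale a xi u :
  coef (rg_mul (rg_star (rg_scale a xi)) (rg_scale a xi)) u =
  a * a * coef (rg_mul (rg_star xi) xi) u.
Proof.
rewrite !coef_sqE /rg_scale big_map mulr_sumr; apply: eq_bigr => p _.
rewrite big_map mulr_sumr; apply: eq_bigr => q _ /=; ring.
Qed.

Lemma Sf_scale c f : 0 <= c -> Sf f -> Sf (fun u => c * f u).
Proof.
move=> c0 [xs [h1 h2]]; exists [seq rg_scale (Num.sqrt c) xi | xi <- xs]; split.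
  move=> xi /mapP [y yx ->] g; rewrite coef_scale => hne; apply: (h1 y yx).
  by apply: contraNneq hne => ->; rewrite mulr0.
move=> g; rewrite h2 !coef_flatten !big_map mulr_sumr; apply: eq_bigr => xi _.
by rewrite coef_sq_scale -expr2 sqr_sqrtr.
Qed.

Lemma Sf_sq xi : supported xi (ball S r) -> Sf (coef (rg_mul (rg_star xi) xi)).
Proof.
move=> h; exists [:: xi]; split; first by move=> y; rewrite inE => /eqP ->.
by move=> g; rewrite /= cats0.
Qed.

Lemma Sf_sum (I : Type) (s : seq I) (P : pred I) (F : I -> G -> R) :
  (forall i, P i -> Sf (F i)) -> Sf (fun u => \sum_(i <- s | P i) F i u).
Proof.
move=> h; elim: s => [|i s IH].
  by apply: Sf_ext Sf0 => u; rewrite big_nil.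
case Pi: (P i).
  by apply: Sf_ext (Sf_add (h i Pi) IH) => u; rewrite big_cons Pi.
by apply: Sf_ext IH => u; rewrite big_cons Pi.
Qed.

Lemma coef_sq_sym xi u : coef (rg_mul (rg_star xi) xi) (u^-1)%g =
   coef (rg_mul (rg_star xi) xi) u.
Proof.
rewrite !coef_sqE exchange_big; apply: eq_bigr => p _; apply: eq_bigr => q _.
rewrite /ind -(inj_eq (@invg_inj _) (q.2^-1 * p.2)%g) invgK invgM invgK.
by rewrite [p.1 * _]mulrC.
Qed.

Lemma Sf_sym f u : Sf f -> f (u^-1)%g = f u.
Proof.
move=> [xs [_ h2]]; rewrite !h2 !coef_flatten big_map [RHS]big_map.
by apply: eq_bigr => xi _; rewrite coef_sq_sym.
Qed.

End Aux2.

Section Aux3.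
Variables (R : rcfType) (G : groupType) (S : seq G) (r : nat).
Hypotheses (S_uniq : uniq S) (S_sym : symmetric_set S) (r1 : (1 <= r)%N).
Implicit Types (x y xi : RG R G) (u g h k : G) (f : G -> R).

Definition Xf g u : R := 2 * ind 1%g u - ind g u - ind (g^-1)%g u.
Definition Df u : R := coef (laplacian R S) u.

Lemma coef_list2 (a b : R) (g1 g2 : G) u :
  coef [:: (a, g1); (b, g2)] u = a * ind g1 u + b * ind g2 u.
Proof. by rewrite coefS !big_cons big_nil /= addr0. Qed.

Lemma coef_xiX g u :
  coef (rg_mul (rg_star [:: (1, 1%g); (-1, g)]) [:: (1, 1%g); (-1, g)]) u = Xf g u.
Proof.
rewrite coef_sqE !big_cons !big_nil /= invg1 !mul1g mulVg mulg1 /Xf; ring.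
Qed.

Lemma sum_const_seq (T : Type) (s : seq T) (c : R) :
  \sum_(t <- s) c = (size s)%:R * c.
Proof.
elim: s => [|t s IH]; first by rewrite big_nil mul0r.
by rewrite big_cons IH /= -addn1 natrD; ring.
Qed.

Lemma DfE u : Df u = (size S)%:R * ind 1%g u - \sum_(s <- S) ind s u.
Proof.
rewrite /Df coefS big_cons big_map /= -sumrN; congr (_ + _).
by apply: eq_bigr => s _ /=; rewrite mulN1r.
Qed.

Lemma perm_invS : perm_eq [seq (s^-1)%g | s <- S] S.
Proof.
apply: uniq_perm => //; first by rewrite (map_inj_uniq (@invg_inj _)).
move=> s; apply/mapP/idP => [[t tS ->]|sS]; first exact: S_sym.
by exists (s^-1)%g; [exact: S_sym | rewrite invgK].
Qed.

Lemma sumX u : \sum_(s <- S) Xf s u = 2 * Df u.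
Proof.
rewrite /Xf !sumrB sum_const_seq DfE.
have -> : \sum_(s <- S) (ind (s^-1)%g u : R) = \sum_(s <- S) ind s u.
  by rewrite -[in RHS](perm_big _ perm_invS) big_map.
ring.
Qed.

Lemma Xf_inv g u : Xf (g^-1)%g u = Xf g u.
Proof. rewrite /Xf invgK; ring. Qed.

Lemma Xf1 u : Xf 1%g u = 0.
Proof. rewrite /Xf invg1; ring. Qed.

Lemma ball_mono n m g : (n <= m)%N -> ball S n g -> ball S m g.
Proof. move=> nm [w [h1 h2 h3]]; exists w; split => //; exact: leq_trans nm. Qed.

Lemma ball_1 n : ball S n 1%g.
Proof. by exists [::]. Qed.

Lemma ball_gen n s : s \in S -> (1 <= n)%N -> ball S n s.
Proof. move=> sS n1; exists [:: s]; split => //=; by [rewrite sS | rewrite mulg1]. Qed.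

Lemma word_prod_rcons (w : seq G) (a : G) : word_prod (rcons w a) = (word_prod w * a)%g.
Proof.
elim: w => [|b w IH] /=; first by rewrite mulg1 mul1g.
by rewrite IH mulgA.
Qed.

Lemma word_prod_cat (w1 w2 : seq G) : word_prod (w1 ++ w2) = (word_prod w1 * word_prod w2)%g.
Proof.
elim: w1 => [|b w IH] /=; first by rewrite mul1g.
by rewrite IH mulgA.
Qed.

Lemma ball_inv n g : ball S n g -> ball S n (g^-1)%g.
Proof.
move=> [w [h1 h2 ->]]; exists (rev [seq (a^-1)%g | a <- w]); split.
- apply/allP => a; rewrite mem_rev => /mapP [b bw ->]; apply: S_sym.
  exact: (allP h1).
- by rewrite size_rev size_map.
elim: w {h1 h2} => [|b w IH] /=; first by rewrite invg1.
by rewrite rev_cons word_prod_rcons -IH invgM.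
Qed.

Lemma ball_split n m g : ball S (n + m) g ->
  exists h k, [/\ ball S n h, ball S m k & g = (h * k)%g].
Proof.
move=> [w [h1 h2 ->]]; exists (word_prod (take n w)), (word_prod (drop n w)); split.
- exists (take n w); split => //; last by rewrite size_take; case: ifP => // /negbT; rewrite -leqNgt.
  by apply/allP => a /mem_take ha; exact: (allP h1).
- exists (drop n w); split => //; last by rewrite size_drop; lia.
  by apply/allP => a /mem_drop ha; exact: (allP h1).
by rewrite -word_prod_cat cat_take_drop.
Qed.

Lemma SfX g : ball S r g -> Sf S r (Xf g).
Proof.
move=> bg; apply: Sf_ext (Sf_sq _) => [u|]; first exact: coef_xiX.
move=> u; rewrite coef_list2 /ind.
case: (1%g =P u) => [<- _|_]; first exact: ball_1.
by case: (g =P u) => [<- //|_]; rewrite !mulr0 addr0 eqxx.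
Qed.

Lemma SfX_S s : s \in S -> Sf S r (Xf s).
Proof. move=> sS; apply: SfX; exact: ball_gen. Qed.

Lemma SfD : Sf S r Df.
Proof.
have h : Sf S r (fun u => \sum_(s <- S | s \in S) Xf s u) by apply: Sf_sum => s; exact: SfX_S.
have h2 : 0 <= (2^-1 : R) by rewrite invr_ge0.
apply: Sf_ext (Sf_scale h2 h) => u.
by rewrite -big_seq sumX mulrA mulVf ?mul1r // pnatr_eq0.
Qed.


Lemma Sf_D1 a : a \in S -> Sf S r (fun u => 2 * Df u - Xf a u).
Proof.
move=> aS.
have h : Sf S r (fun u => \sum_(s <- S | (s \in S) && (s != a)) Xf s u).
  by apply: Sf_sum => s /andP [sS _]; exact: SfX_S.
apply: Sf_ext h => u.
by rewrite -big_seq_cond -sumX (bigD1_seq a) //= addrC addrK.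
Qed.

Lemma Sf_D2 a b : a \in S -> b \in S -> a != b ->
  Sf S r (fun u => 2 * Df u - Xf a u - Xf b u).
Proof.
move=> aS bS ab.
set S' := [seq s <- S | s != a].
have bS' : b \in S' by rewrite mem_filter eq_sym ab.
have uS' : uniq S' by rewrite filter_uniq.
have h : Sf S r (fun u => \sum_(s <- S' | (s \in S') && (s != b)) Xf s u).
  by apply: Sf_sum => s /andP [sS _]; apply: SfX_S; move: sS; rewrite mem_filter => /andP[].
apply: Sf_ext h => u.
have e : \sum_(i <- S | i != a) Xf i u = \sum_(i <- S') Xf i u by rewrite big_filter.
rewrite -big_seq_cond -sumX (bigD1_seq a) //= e [in RHS](bigD1_seq b) //=.
ring.
Qed.

Lemma Sf_cert h k : ball S r h -> ball S r k ->
  Sf S r (fun u => 2 * Xf h u + 2 * Xf k u - Xf (h * k)%g u).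
Proof.
move=> bh bk.
pose xi : RG R G := [:: (1, (h^-1)%g); (-2, 1%g); (1, k)].
have sx : supported xi (ball S r).
  move=> u; rewrite coefS !big_cons big_nil /= /ind.
  case: ((h^-1)%g =P u) => [<- _|_]; first exact: ball_inv.
  case: (1%g =P u) => [<- _|_]; first exact: ball_1.
  by case: (k =P u) => [<- //|_]; rewrite !mulr0 !addr0 eqxx.
apply: Sf_ext (Sf_sq sx) => u.
rewrite coef_sqE !big_cons !big_nil /= /Xf !invgK invg1 invgM mulgV !mul1g !mulg1 mulVg.
ring.
Qed.

Lemma Sf_4D1 : Sf S r (fun u => 4 * Df u - Xf 1%g u).
Proof.
apply: Sf_ext (Sf_scale (_ : 0 <= 4) SfD) => [u|]; last by [].
by rewrite Xf1 subr0.
Qed.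

Lemma Sf_base g : ball S 2 g -> Sf S r (fun u => 4 * Df u - Xf g u).
Proof.
move=> [w [h1 h2 ->]].
case: w h1 h2 => [|s1 [|s2 [|s3 w]]] //= h1 h2.
- exact: Sf_4D1.
- move: h1; rewrite andbT mulg1 => s1S.
  apply: Sf_ext (Sf_add (Sf_D1 s1S) (Sf_scale (_ : 0 <= 2) SfD)) => [u|]; last by [].
  ring.
move: h1; rewrite andbT mulg1 => /andP [s1S s2S].
have [e|ne] := eqVneq s1 (s2^-1)%g.
  by rewrite e mulVg; exact: Sf_4D1.
have hD : Sf S r (fun u => 2 * Df u - Xf s1 u - Xf s2 u).
  have [e2|ne2] := eqVneq s1 s2; last exact: Sf_D2.
  subst s2.
  have h := Sf_D2 s1S (S_sym s1S) (_ : s1 != (s1^-1)%g).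
  by apply: Sf_ext (h ne) => u; rewrite Xf_inv.
have hc := Sf_cert (ball_gen s1S r1) (ball_gen s2S r1).
apply: Sf_ext (Sf_add (Sf_scale (_ : 0 <= 2) hD) hc) => [u|]; last by [].
ring.
Qed.


Lemma Sf_mono c c' g : c <= c' -> Sf S r (fun u => c * Df u - Xf g u) ->
  Sf S r (fun u => c' * Df u - Xf g u).
Proof.
move=> cc h; have h0 : 0 <= c' - c by rewrite subr_ge0.
apply: Sf_ext (Sf_add (Sf_scale h0 SfD) h) => u; ring.
Qed.

Lemma Sf_Q m : forall n g, (1 <= n)%N -> (n <= r)%N -> (n <= 2 ^ m)%N ->
  ball S (2 * n) g -> Sf S r (fun u => 2%:R ^+ (2 * m + 2) * Df u - Xf g u).
Proof.
elim: m => [|m IH] n g n1 nr nm bg.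
  have n_1 : n = 1%N by move: nm; rewrite expn0; lia.
  move: bg; rewrite n_1 => bg.
  by apply: Sf_ext (Sf_base bg) => u /=; rewrite expr2 -natrM.
have eC : 2%:R ^+ (2 * m.+1 + 2) = 4 * 2%:R ^+ (2 * m + 2) :> R.
  by rewrite (_ : (2 * m.+1 + 2 = (2 * m + 2).+2)%N) ?exprS; [rewrite mulrA -natrM | lia].
have C0 : 0 <= 2%:R ^+ (2 * m + 2) :> R by rewrite exprn_ge0.
have [n_1|n2] := eqVneq n 1%N.
  move: bg; rewrite n_1 => bg.
  have h := IH 1%N g (leqnn _) r1 (expn_gt0 _ _) bg.
  by apply: Sf_mono h; rewrite eC ler_peMl // (ler_nat _ 1 4).
have [h [k [bh bk ->]]] : exists h k, [/\ ball S n h, ball S n k & g = (h * k)%g].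
  by apply: ball_split; rewrite addnn -mul2n.
set n' := (n - n %/ 2)%N.
have n'1 : (1 <= n')%N by rewrite /n'; lia.
have n'r : (n' <= r)%N by rewrite /n'; lia.
have n'm : (n' <= 2 ^ m)%N by move: nm; rewrite expnS /n'; lia.
have nn' : (n <= 2 * n')%N by rewrite /n'; lia.
have Hh := IH n' h n'1 n'r n'm (ball_mono nn' bh).
have Hk := IH n' k n'1 n'r n'm (ball_mono nn' bk).
have hc := Sf_cert (ball_mono nr bh) (ball_mono nr bk).
have t0 : 0 <= 2 :> R by [].
apply: Sf_ext (Sf_add (Sf_add (Sf_scale t0 Hh) (Sf_scale t0 Hk)) hc) => u.
rewrite eC; ring.
Qed.

Lemma SfX2 g : ball S (2 * r) g -> Sf S r (Xf g).
Proof.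
rewrite mul2n -addnn => /ball_split [h [k [bh bk ->]]].
pose xi : RG R G := [:: (1, (h^-1)%g); (-1, k)].
have sx : supported xi (ball S r).
  move=> u; rewrite coef_list2 /ind.
  case: ((h^-1)%g =P u) => [<- _|_]; first exact: ball_inv.
  by case: (k =P u) => [<- //|_]; rewrite !mulr0 addr0 eqxx.
apply: Sf_ext (Sf_sq sx) => u.
rewrite coef_sqE !big_cons !big_nil /= /Xf !invgK invgM mulgV mulVg; ring.
Qed.


Lemma ind_inv g u : ind (g^-1)%g u = ind g (u^-1)%g :> R.
Proof. by rewrite /ind -{1}(invgK u) (inj_eq (@invg_inj _)). Qed.

Lemma aug_cat x y : aug (x ++ y) = aug x + aug y.
Proof. by rewrite /aug big_cat. Qed.

Lemma aug_scale c x : aug (rg_scale c x) = c * aug x.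
Proof. by rewrite /aug big_map mulr_sumr. Qed.

Lemma aug_lap : aug (laplacian R S) = 0.
Proof.
rewrite /aug big_cons big_map /= sum_const_seq mulrN1; exact: subrr.
Qed.

Lemma main_aux (x : RG R G) (x_IG : in_IG x) (x_selfadj : rg_eq (rg_star x) x)
  (b : RG R G) (b_supp : supported b (ball S (2 * r)))
  (hxb : Sigma2I S r (rg_sub x b))
  (eps : R) (heps : (2%:R ^+ (2 * up_log 2 r) * l1norm b <= eps)%R) :
  Sigma2I S r (rg_add x (rg_scale eps (laplacian R S))).
Proof.
case: hxb => hI hS.
have cxb u : coef (rg_sub x b) u = coef x u - coef b u.
  by rewrite /rg_sub /rg_add coef_cat coef_scale mulN1r.
have xsym u : coef x (u^-1)%g = coef x u by rewrite -coef_star x_selfadj.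
have bsym u : coef b (u^-1)%g = coef b u.
  have := Sf_sym u hS; rewrite !cxb xsym => e.
  by apply: (addrI (coef x u)); rewrite -[LHS]opprK -[RHS]opprK; congr (- _); rewrite -[in RHS](opprK (coef x u)); lra.
have augb : aug b = 0.
  move: hI x_IG; rewrite /in_IG /rg_sub /rg_add aug_cat aug_scale => h1 h2; lra.
split.
  by rewrite /in_IG /rg_add aug_cat aug_scale aug_lap x_IG mulr0 addr0.
set B := undup [seq p.2 | p <- b].
set be := coef b.
have sum0 : \sum_(g <- B) be g = 0 by rewrite -aug_support.
have key u : coef b u = - 2^-1 * \sum_(g <- B) be g * Xf g u.
  have e1 : \sum_(g <- B) be g * Xf g u =
     2 * ind 1%g u * \sum_(g <- B) be g - \sum_(g <- B) be g * ind g u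
     - \sum_(g <- B) be g * ind g (u^-1)%g.
    rewrite mulr_sumr -!sumrB; apply: eq_bigr => g _; rewrite /Xf ind_inv; ring.
  by rewrite e1 sum0 -!coef_support bsym; field.
pose L := up_log 2 r.
have rL : (r <= 2 ^ L)%N by apply: up_logP.
pose C : R := 4 * 2%:R ^+ (2 * L).
have C0 : 0 <= C by rewrite mulr_ge0 ?exprn_ge0.
have hX g : ball S (2 * r) g -> Sf S r (fun u => C * Df u - Xf g u).
  move=> bg; have := Sf_Q r1 (leqnn r) rL bg.
  by apply: Sf_ext => u; rewrite /C exprD (_ : (2%:R : R) ^+ 2 = 4); [ring | rewrite expr2 -natrM].
pose pr g := (0 < be g) && (g != 1%g).
pose P := \sum_(g <- B | pr g) be g.
have hP : 2 * P <= l1norm b.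
  rewrite /l1norm -/B (bigID pr) /=.
  have -> : \sum_(g <- B | pr g) `|coef b g| = P.
    by apply: eq_bigr => g /andP [h _]; rewrite gtr0_norm.
  have e : \sum_(g <- B | ~~ pr g) be g = - P.
    by move: sum0; rewrite (bigID pr) /= -/P => e; lra.
  have := ler_norm_sum B (fun g => be g) (fun g => ~~ pr g).
  rewrite e normrN.
  have P0 : 0 <= P by rewrite /P big_seq_cond; apply: sumr_ge0 => g /andP [_ /andP [h _]]; exact: ltW.
  rewrite ger0_norm //; rewrite /be; lra.
have heps' : C * P / 2 <= eps.
  apply: le_trans heps; rewrite /C -/L.
  have t : 0 <= 2%:R ^+ (2 * L) :> R by rewrite exprn_ge0.
  have := ler_wpM2l t hP; lra.
have H : Sf S r (fun u => coef b u + eps * Df u).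
  have hA : Sf S r (fun u => \sum_(g <- B | pr g) be g / 2 * (C * Df u - Xf g u)).
    apply: Sf_sum => g /andP [bg g1]; apply: Sf_scale; first by rewrite divr_ge0 // ltW.
    by apply: hX; apply: b_supp; rewrite -/be gt_eqF.
  have hB : Sf S r (fun u => \sum_(g <- B | ~~ pr g) (- be g / 2) * Xf g u).
    apply: Sf_sum => g; rewrite /pr negb_and negbK -leNgt.
    have [->|g1] := eqVneq g 1%g.
      by move=> _; apply: Sf_ext (Sf_scale (lexx (0:R)) SfD) => u; rewrite Xf1; ring.
    rewrite orbF => bg.
    have [b0|bn0] := eqVneq (be g) 0.
      by apply: Sf_ext (Sf_scale (lexx (0:R)) SfD) => u; rewrite b0; ring.
    apply: Sf_scale; first by rewrite divr_ge0 // oppr_ge0.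
    by apply: SfX2; apply: b_supp.
  have hC : Sf S r (fun u => (eps - C * P / 2) * Df u).
    by apply: Sf_scale SfD; rewrite subr_ge0.
  apply: Sf_ext (Sf_add (Sf_add hA hB) hC) => u.
  have eA : \sum_(g <- B | pr g) be g / 2 * (C * Df u - Xf g u) =
     C * Df u / 2 * P - 2^-1 * \sum_(g <- B | pr g) be g * Xf g u.
    set D := Df u; rewrite [_ * P]mulr_sumr [2^-1 * _]mulr_sumr -sumrB; apply: eq_bigr => g _; ring.
  have eB : \sum_(g <- B | ~~ pr g) (- be g / 2) * Xf g u =
     - 2^-1 * \sum_(g <- B | ~~ pr g) be g * Xf g u.
    rewrite mulr_sumr; apply: eq_bigr => g _; ring.
  have eK : \sum_(g <- B) be g * Xf g u =
     \sum_(g <- B | pr g) be g * Xf g u + \sum_(g <- B | ~~ pr g) be g * Xf g u.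
    by rewrite (bigID pr).
  rewrite eA eB key eK; set D := Df u; ring.
apply: Sf_ext (Sf_add hS H) => u.
rewrite cxb /rg_add coef_cat coef_scale -/(Df u); set D := Df u; ring.
Qed.

End Aux3.

Theorem lemma4p10 (R : rcfType) (G : groupType) (S : seq G)
  (S_uniq : uniq S) (S_sym : symmetric_set S) (S_gen : generates S)
  (r : nat) (r_ge1 : (1 <= r)%N)
  (x : RG R G) (x_IG : in_IG x) (x_selfadj : rg_eq (rg_star x) x)
  (b : RG R G) (b_supp : supported b (ball S (2 * r)))
  (hxb : Sigma2I S r (rg_sub x b))
  (eps : R) (heps : (2%:R ^+ (2 * up_log 2 r) * l1norm b <= eps)%R) :
  Sigma2I S r (rg_add x (rg_scale eps (laplacian R S))).
Proof.
exact: (main_aux S_uniq S_sym r_ge1 x_IG x_selfadj b_supp hxb heps).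
Qed.
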